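(* Suppose $p_{XY}$ has full support on $\mathcal{X}\times\mathcal{Y}$, and let $p(u,x,y,z)=p_{XY}(x,y)p_{Z|XY}(z|x,y)p(u|x,y,z)$ be a joint p.m.f. (with $U$ on a finite set $\mathcal{U}$) satisfying the Markov chains $U-X-Y$, $Z-(U,Y)-X$ and $U-(Y,Z)-X$. For $y\in\mathcal{Y}$ and $i\in[k(y)]$ let $\mathcal{U}_i^{(y)}=\{u\in\mathcal{U}: p(u,z|y)>0\text{ for some }z\in\mathcal{Z}_i^{(y)}\}$. Then for any $y,y'\in\mathcal{Y}$, $i\in[k(y)]$, $j\in[k(y')]$: if $\vec\alpha_i^{(y)}\neq\vec\alpha_j^{(y')}$, then $\mathcal{U}_i^{(y)}\cap\mathcal{U}_j^{(y')}=\emptyset$.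
   Context: $\mathcal{X},\mathcal{Y},\mathcal{Z}$ are finite. For $y\in\mathcal{Y}$ let $\mathcal{Z}^{(y)}=\{z\in\mathcal{Z}:\exists x,\ p_{Z|XY}(z|x,y)>0\}$. For $z,z'\in\mathcal{Z}^{(y)}$, write $z\equiv_y z'$ if the column vectors $(p_{Z|XY}(z|x,y))_{x\in\mathcal{X}}$ and $(p_{Z|XY}(z'|x,y))_{x\in\mathcal{X}}$ are positive scalar multiples of each other; this is an equivalence relation partitioning $\mathcal{Z}^{(y)}=\mathcal{Z}_1^{(y)}\uplus\cdots\uplus\mathcal{Z}_{k(y)}^{(y)}$. For each class, the $|\mathcal{X}|\times|\mathcal{Z}_i^{(y)}|$ matrix $A_i^{(y)}(x,z)=p_{Z|XY}(z|x,y)$ is rank one and can be uniquely written as $A_i^{(y)}(x,z)=\vec\alpha_i^{(y)}(x)\vec\gamma_i^{(y)}(z)$ with $\vec\alpha_i^{(y)}$ a probability vector on $\mathcal{X}$ (nonnegative entries summing to one). $[k]=\{1,\dots,k\}$. *)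

(* Defs.v *)
From HB Require Import structures.
From mathcomp Require Import all_boot all_order all_algebra.
Set Implicit Arguments. Unset Strict Implicit. Unset Printing Implicit Defensive.
Import Order.TTheory GRing.Theory Num.Theory.
Local Open Scope ring_scope.

Section Defs.
Variables (R : realFieldType) (X Y Z U : finType).
(* pXY x y = p_{XY}(x,y); pZ x y z = p_{Z|XY}(z|x,y); pU x y z u = p(u|x,y,z) *)
Variables (pXY : X -> Y -> R) (pZ : X -> Y -> Z -> R) (pU : X -> Y -> Z -> U -> R).

Definition joint (u : U) (x : X) (y : Y) (z : Z) : R := pXY x y * pZ x y z * pU x y z u.

Definition pX x := \sum_u \sum_y \sum_z joint u x y z.
Definition pY y := \sum_u \sum_x \sum_z joint u x y z.
Definition pUX u x := \sum_y \sum_z joint u x y z.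
Definition pXYm x y := \sum_u \sum_z joint u x y z.
Definition pUY u y := \sum_x \sum_z joint u x y z.
Definition pYZ y z := \sum_u \sum_x joint u x y z.
Definition pUXY u x y := \sum_z joint u x y z.
Definition pUYZ u y z := \sum_x joint u x y z.
Definition pXYZ x y z := \sum_u joint u x y z.

Definition pUZ_given_Y u z y := pUYZ u y z / pY y.

(* Markov chains, in the standard form p(a,b,c) p(b) = p(a,b) p(b,c) *)
Definition markov_U_X_Y := forall u x y, pUXY u x y * pX x = pUX u x * pXYm x y.
Definition markov_Z_UY_X := forall u x y z,
  joint u x y z * pUY u y = pUYZ u y z * pUXY u x y.
Definition markov_U_YZ_X := forall u x y z,
  joint u x y z * pYZ y z = pUYZ u y z * pXYZ x y z.

Definition inZy (y : Y) (z : Z) : Prop := exists x, 0 < pZ x y z.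

Definition zequiv (y : Y) (z z' : Z) : Prop :=
  inZy y z /\ inZy y z' /\ exists c : R, 0 < c /\ forall x, pZ x y z = c * pZ x y z'.

(* U_i^{(y)} for the class i of z0 in Z^{(y)} *)
Definition Uclass (y : Y) (z0 : Z) (u : U) : Prop :=
  exists z, zequiv y z z0 /\ 0 < pUZ_given_Y u z y.

(* alpha is the (unique) probability vector in the rank-one factorization
   A(x,z) = alpha(x) gamma(z) of the class of z0 *)
Definition is_alpha (y : Y) (z0 : Z) (alpha : {ffun X -> R}) : Prop :=
  (forall x, 0 <= alpha x) /\ \sum_x alpha x = 1 /\
  exists gamma : Z -> R, forall x z, zequiv y z z0 -> pZ x y z = alpha x * gamma z.
End Defs.

(* Main.v *)
Require Import Defs.
From HB Require Import structures.
From mathcomp Require Import all_boot all_order all_algebra.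
From mathcomp Require Import ring lra.
Import Order.TTheory GRing.Theory Num.Theory.
Local Open Scope ring_scope.
Set Implicit Arguments. Unset Strict Implicit.

Lemma key_alg (R : fieldType) (a b px pxy J pUY pUYZ pYZ al g : R) :
  pxy != 0 -> pUYZ != 0 -> pYZ != 0 ->
  b * px = a * pxy -> J * pUY = pUYZ * b -> J * pYZ = pUYZ * (pxy * (al * g)) ->
  a = (pUY * g / pYZ) * (al * px).
Proof.
move=> h1 h2 h3 E1 E2 E3.
have K : (a * pYZ) * (pxy * pUYZ) = (pUY * g * al * px) * (pxy * pUYZ).
  have -> : a * pYZ * (pxy * pUYZ) = pYZ * pUYZ * (a * pxy) by ring.
  rewrite -E1.
  have -> : pYZ * pUYZ * (b * px) = px * pYZ * (pUYZ * b) by ring.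
  rewrite -E2.
  have -> : px * pYZ * (J * pUY) = px * pUY * (J * pYZ) by ring.
  rewrite E3; ring.
have K2 := mulIf (mulf_neq0 h1 h2) K.
rewrite -[a](mulfK h3) K2; field.
exact: h3.
Qed.

Lemma le_sum_term (R : realFieldType) (I : finType) (F : I -> R) i :
  (forall j, 0 <= F j) -> F i <= \sum_j F j.
Proof. by move=> h; rewrite (bigD1 i) //= lerDl sumr_ge0. Qed.

Lemma pos_of_div (R : realFieldType) (a b : R) : 0 <= b -> 0 < a / b -> 0 < a.
Proof.
move=> hb h.
have hb0 : b != 0 by apply: contraTneq h => ->; rewrite invr0 mulr0 ltxx.
have hbp : 0 < b by rewrite lt_def hb0 hb.
by rewrite -[a](divfK hb0) mulr_gt0.
Qed.

Section S.
Variables (R : realFieldType) (X Y Z U : finType)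
  (pXY : X -> Y -> R) (pZ : X -> Y -> Z -> R) (pU : X -> Y -> Z -> U -> R)
  (hXYpos : forall x y, 0 < pXY x y)
  (hZnn : forall x y z, 0 <= pZ x y z)
  (hZsum : forall x y, \sum_z pZ x y z = 1)
  (hUnn : forall x y z u, 0 <= pU x y z u)
  (hUsum : forall x y z, \sum_u pU x y z u = 1)
  (hM1 : markov_U_X_Y pXY pZ pU)
  (hM2 : markov_Z_UY_X pXY pZ pU)
  (hM3 : markov_U_YZ_X pXY pZ pU).

Lemma joint_ge0 u x y z : 0 <= joint pXY pZ pU u x y z.
Proof. by rewrite /joint mulr_ge0 // mulr_ge0 // ltW. Qed.

Lemma L1 x y z : pXYZ pXY pZ pU x y z = pXY x y * pZ x y z.
Proof. by rewrite /pXYZ /joint -big_distrr /= hUsum mulr1. Qed.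

Lemma L2 x y : pXYm pXY pZ pU x y = pXY x y.
Proof.
rewrite /pXYm exchange_big /=.
under eq_bigr => z _ do rewrite -/(pXYZ pXY pZ pU x y z) L1.
by rewrite -big_distrr /= hZsum mulr1.
Qed.

Lemma L3 x : pX pXY pZ pU x = \sum_y pXY x y.
Proof.
rewrite /pX exchange_big /=.
by apply: eq_bigr => y _; rewrite -L2.
Qed.

Lemma pX_gt0 x (y : Y) : 0 < pX pXY pZ pU x.
Proof.
rewrite L3 (bigD1 y) //=.
have := hXYpos x y.
have : 0 <= \sum_(i | i != y) pXY x i by apply: sumr_ge0 => i _; exact: ltW.
lra.
Qed.

Lemma pY_ge0 y : 0 <= pY pXY pZ pU y.
Proof. by apply: sumr_ge0 => u _; apply: sumr_ge0 => x _; apply: sumr_ge0 => z _; exact: joint_ge0. Qed.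

Lemma side u y z0 (alpha : {ffun X -> R}) z :
  is_alpha pZ y z0 alpha -> zequiv pZ y z z0 -> 0 < pUYZ pXY pZ pU u y z ->
  exists c, 0 < c /\ forall x, pUX pXY pZ pU u x = c * (alpha x * pX pXY pZ pU x).
Proof.
move=> [ha0 [_ [g hg]]] hz hp.
have [[x1 hx1] _] := hz.
have hgz : 0 < g z.
  move: hx1; rewrite (hg _ _ hz) => hx1.
  have := ha0 x1; nra.
have hYZ : 0 < pYZ pXY pZ pU y z.
  apply: lt_le_trans hp _.
  apply: (@le_sum_term _ _ (fun u => pUYZ pXY pZ pU u y z)) => j.
  by apply: sumr_ge0 => x _; exact: joint_ge0.
have hUY : 0 < pUY pXY pZ pU u y.
  apply: lt_le_trans hp _.
  apply: ler_sum => x _.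
  apply: (@le_sum_term _ _ (fun z => joint pXY pZ pU u x y z)) => j.
  exact: joint_ge0.
exists (pUY pXY pZ pU u y * g z / pYZ pXY pZ pU y z); split.
  by rewrite divr_gt0 // mulr_gt0.
move=> x.
have E1 := hM1 u x y; rewrite L2 in E1.
have E3 := hM3 u x y z; rewrite L1 (hg _ _ hz) in E3.
apply: (key_alg _ _ _ E1 (hM2 u x y z) E3); by rewrite gt_eqF.
Qed.

End S.

Unset Implicit Arguments.

Theorem claim1 (R : realFieldType) (X Y Z U : finType)
  (pXY : X -> Y -> R) (pZ : X -> Y -> Z -> R) (pU : X -> Y -> Z -> U -> R)
  (hXYpos : forall x y, 0 < pXY x y)
  (hXYsum : \sum_x \sum_y pXY x y = 1)
  (hZnn : forall x y z, 0 <= pZ x y z)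
  (hZsum : forall x y, \sum_z pZ x y z = 1)
  (hUnn : forall x y z u, 0 <= pU x y z u)
  (hUsum : forall x y z, \sum_u pU x y z u = 1)
  (hM1 : markov_U_X_Y pXY pZ pU)
  (hM2 : markov_Z_UY_X pXY pZ pU)
  (hM3 : markov_U_YZ_X pXY pZ pU)
  (y y' : Y) (z0 z0' : Z)
  (hz0 : inZy pZ y z0) (hz0' : inZy pZ y' z0')
  (alpha alpha' : {ffun X -> R})
  (ha : is_alpha pZ y z0 alpha) (ha' : is_alpha pZ y' z0' alpha')
  (hne : alpha <> alpha') :
  forall u : U, ~ (Uclass pXY pZ pU y z0 u /\ Uclass pXY pZ pU y' z0' u).
Proof.
move=> u [[z [hz hp]] [z' [hz' hp']]].
have hp1 := pos_of_div (pY_ge0 hXYpos hZnn hUnn y) hp.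
have hp2 := pos_of_div (pY_ge0 hXYpos hZnn hUnn y') hp'.
have [c [hc Hc]] := side hXYpos hZnn hZsum hUnn hUsum hM1 hM2 hM3 ha hz hp1.
have [c' [hc' Hc']] := side hXYpos hZnn hZsum hUnn hUsum hM1 hM2 hM3 ha' hz' hp2.
have E : forall x, c * alpha x = c' * alpha' x.
  move=> x; have := Hc x; rewrite Hc' !mulrA => /esym e.
  apply: (mulIf _ e); rewrite gt_eqF //; exact: (pX_gt0 hXYpos hZsum hUsum x y).
have Ecc : c = c'.
  have : \sum_x c * alpha x = \sum_x c' * alpha' x by apply: eq_bigr => x _; exact: E.
  rewrite -!big_distrr /=.
  case: ha => _ [-> _]; case: ha' => _ [-> _].
  by rewrite !mulr1.
apply: hne; apply/ffunP => x.
apply: (mulfI (x:=c)); first by rewrite gt_eqF.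
by rewrite E Ecc.
Qed.
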